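(* Let $\dot x$ be a hereditarily symmetric name for a subset of $\omega$, supported by a countable $\rho$-closed set $A\subseteq\omega_1$. Then there exists a rank-$1$ packet scheme $\mathfrak S$ over $A$ (i.e. with first coordinate $A$) such that $\Vdash\dot x=\dot x_{\mathfrak S}$.
   Context: $\rho:\omega_1\setminus\{0\}\to\omega_1$ is the generic regressive map added by finite partial regressive functions; $\operatorname{Succ}_\rho(\xi)=\{\eta:\rho(\eta)=\xi\}$; a set is $\rho$-closed if closed under $\rho$, $\operatorname{cl}_\rho(A)$ the least $\rho$-closed superset. $\mathbb P_1=\operatorname{Fn}(\omega_1\times\omega\times\omega,2,{<}\omega)$. For $\xi<\omega_1,i<\omega$, $s\subseteq\omega$ finite or cofinite, $\tau^{\mathrm{1cas}}_{\xi,i,s}$ flips the value of a condition at each coordinate $(\zeta,i,n)$ with $n\in s$ and $\zeta\in\{\xi\}\cup\operatorname{Succ}_\rho(\xi)$; $\mathscr G^{\mathrm{1cas}}_\rho$ is the group they generate; $\operatorname{Fix}^{\mathrm{1cas}}_\rho(A)$ is the subgroup acting trivially on coordinates $(\zeta,j,n)$ with $\zeta\in\operatorname{cl}_\rho(A)$; $\mathscr F^{\mathrm{1cas}}_\rho$ is the filter of subgroups generated by these for countable $A$; hereditarily symmetric names are with respect to $(\mathbb P_1,\mathscr G^{\mathrm{1cas}}_\rho,\mathscr F^{\mathrm{1cas}}_\rho)$; a name is supported by $A$ if fixed by $\operatorname{Fix}^{\mathrm{1cas}}_\rho(A)$. A name for a subset of $\omega$ is one all of whose members are pairs $(\check m,r)$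 with $m\in\omega$, $r\in\mathbb P_1$. An exact finite cascade packet is a condition $r\in\mathbb P_1$ whose node-support $\{\xi:\exists i,n\ r(\xi,i,n)\text{ defined}\}$ is finite and $\rho$-closed. A rank-$1$ packet scheme is $\mathfrak S=(A,\langle\mathcal C_m:m<\omega\rangle)$ with $A$ countable $\rho$-closed and each $\mathcal C_m$ a countable family of exact finite cascade packets with node-support $\subseteq A$; $\dot x_{\mathfrak S}=\{(\check m,r):m<\omega, r\in\mathcal C_m\}$. *)

(* Defs.v *)
From mathcomp Require Import all_boot.
Set Implicit Arguments. Unset Strict Implicit. Unset Printing Implicit Defensive.

Definition countable_set (O : Type) (B : O -> Prop) : Prop :=
  exists f : nat -> O, forall x, B x -> exists n, f n = x.

(* (O, lt, z) is (an isomorphic copy of) omega_1 with least element z = 0: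
   a well-founded strict total order, uncountable, all of whose proper
   initial segments are countable. *)
Definition is_omega1 (O : Type) (lt : O -> O -> Prop) (z : O) : Prop :=
  (forall x, ~ lt x x) /\
  (forall x y w, lt x y -> lt y w -> lt x w) /\
  (forall x y, lt x y \/ x = y \/ lt y x) /\
  well_founded lt /\
  (forall x, ~ lt x z) /\
  (forall x, countable_set (fun y => lt y x)) /\
  ~ countable_set (fun _ : O => True).

(* rho : omega_1 \ {0} -> omega_1 regressive (its value at 0 is irrelevant). *)
Definition regressive (O : Type) (lt : O -> O -> Prop) (z : O) (rho : O -> O) :=
  forall eta, eta <> z -> lt (rho eta) eta.

Section Cascade.
Variables (O : eqType) (z : O) (rho : O -> O).

Definition Succ (xi eta : O) : bool := (eta != z) && (rho eta == xi).

Definition rho_closed (B : O -> Prop) : Prop :=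
  forall eta, B eta -> eta <> z -> B (rho eta).

Definition cl (A : O -> Prop) : O -> Prop :=
  fun x => forall B, rho_closed B -> (forall y, A y -> B y) -> B x.

(* ---------- P_1 = Fn(omega_1 x omega x omega, 2, <omega) ---------- *)
Definition cond := O -> nat -> nat -> option bool.

Definition is_cond (p : cond) : Prop :=
  exists l : seq (O * nat * nat),
    forall x i n, p x i n <> None -> (x, i, n) \in l.

Definition ext (q p : cond) : Prop :=
  forall x i n b, p x i n = Some b -> q x i n = Some b.

Definition fin_or_cofin (s : nat -> bool) : Prop :=
  (exists N, forall n, N <= n -> s n = false) \/
  (exists N, forall n, N <= n -> s n = true).

Definition tau (xi : O) (i : nat) (s : nat -> bool) (p : cond) : cond :=
  fun x j n =>
    if [&& j == i, s n & (x == xi) || Succ xi x]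
    then omap negb (p x j n) else p x j n.

Definition gen := (O * nat * (nat -> bool))%type.
Fixpoint valid_word (w : seq gen) : Prop :=
  if w is g :: w' then fin_or_cofin g.2 /\ valid_word w' else True.
Definition act_word (w : seq gen) : cond -> cond :=
  foldr (fun g f => fun p => tau g.1.1 g.1.2 g.2 (f p)) id w.

Definition inG (pi : cond -> cond) : Prop :=
  exists w, valid_word w /\ pi = act_word w.

Definition Fix (A : O -> Prop) (pi : cond -> cond) : Prop :=
  inG pi /\ forall p x j n, cl A x -> pi p x j n = p x j n.

(* a name: set of pairs (check m, r) *)
Definition name := nat -> cond -> Prop.

Definition is_name (X : name) : Prop := forall m r, X m r -> is_cond r.

Definition act_name (pi : cond -> cond) (X : name) : name :=
  fun m r' => exists r, X m r /\ pi r = r'.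

Definition fixes (pi : cond -> cond) (X : name) : Prop :=
  forall m r, act_name pi X m r <-> X m r.

Definition supported_by (A : O -> Prop) (X : name) : Prop :=
  forall pi, Fix A pi -> fixes pi X.

(* sym(X) belongs to the filter generated by Fix(A'), A' countable
   (this family is directed, so membership = containing some Fix(A')).
   The members check m of X are hereditarily symmetric automatically. *)
Definition hereditarily_symmetric (X : name) : Prop :=
  is_name X /\
  exists A', countable_set A' /\ forall pi, Fix A' pi -> fixes pi X.

Definition forces_mem (p : cond) (m : nat) (Y : name) : Prop :=
  forall q, is_cond q -> ext q p ->
    exists q', is_cond q' /\ ext q' q /\ exists r, Y m r /\ ext q' r.

(* 1 ||- X = Y  (Kunen's definition unfolded for names with check-name
   first coordinates) *)
Definition forces_eq (X Y : name) : Prop :=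
  (forall m r, X m r -> forall q, is_cond q -> ext q r -> forces_mem q m Y) /\
  (forall m r, Y m r -> forall q, is_cond q -> ext q r -> forces_mem q m X).

Definition node_support (r : cond) : O -> Prop :=
  fun x => exists i n, r x i n <> None.

Definition exact_packet (r : cond) : Prop :=
  is_cond r /\ rho_closed (node_support r).

Definition countable_family (C : cond -> Prop) : Prop :=
  exists f : nat -> cond, forall r, C r -> exists n, f n = r.

Definition packet_scheme (A : O -> Prop) (C : nat -> cond -> Prop) : Prop :=
  [/\ countable_set A, rho_closed A &
      forall m, countable_family (C m) /\
        forall r, C m r -> exact_packet r /\ (forall x, node_support r x -> A x)].

Definition x_S (C : nat -> cond -> Prop) : name := fun m r => C m r.

End Cascade.

(* Main.v *)
Require Import Defs.
From Stdlib Require Import Classical ClassicalEpsilon FunctionalExtensionality Lia.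
From mathcomp Require Import all_boot zify.
Set Implicit Arguments. Unset Strict Implicit. Unset Printing Implicit Defensive.

Section Proof.
Variables (O : eqType) (lt : O -> O -> Prop) (z : O) (rho : O -> O).
Hypothesis Hom1 : is_omega1 lt z.
Hypothesis Hreg : regressive lt z rho.
Variable A : O -> Prop.
Hypothesis HAc : rho_closed z rho A.

Definition Ab (x : O) : bool := if excluded_middle_informative (A x) then true else false.
Lemma AbP x : reflect (A x) (Ab x).
Proof. rewrite /Ab; case: excluded_middle_informative => H; by constructor. Qed.

Lemma lt_irr x : ~ lt x x. Proof. by case: Hom1. Qed.
Lemma lt_trans x y w : lt x y -> lt y w -> lt x w.
Proof. case: Hom1 => _ [H _]; exact: H. Qed.
Lemma lt_wf : well_founded lt. Proof. by case: Hom1 => _ [_ [_ [H _]]]. Qed.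

Definition mask (w : seq (gen O)) (x : O) (j n : nat) : bool :=
  odd (count (fun g : gen O => [&& j == g.1.2, g.2 n & (x == g.1.1) || Succ z rho g.1.1 x]) w).

Lemma mask_cons (g : gen O) (w : seq (gen O)) x j n : mask (g :: w) x j n =
  [&& j == g.1.2, g.2 n & (x == g.1.1) || Succ z rho g.1.1 x] (+) mask w x j n.
Proof. by rewrite /mask /= oddD oddb. Qed.

Lemma act_mask (w : seq (gen O)) (p : cond O) x j n : act_word z rho w p x j n =
  if mask w x j n then omap negb (p x j n) else p x j n.
Proof.
elim: w => [|g w IH] //=.
rewrite /tau IH mask_cons.
case: [&& _, _ & _] => /=; case: (mask w x j n) => //; case: (p x j n) => //= b; by rewrite negbK.
Qed.

Lemma mask_A (w : seq (gen O)) x j n : (forall g, List.In g w -> ~ A g.1.1) -> A x -> mask w x j n = false.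
Proof.
move=> Hw Ax; rewrite /mask.
suff -> : count (fun g : gen O => [&& j == g.1.2, g.2 n & (x == g.1.1) || Succ z rho g.1.1 x]) w = 0 by [].
elim: w Hw => [|g w IH] Hw //=.
rewrite IH; last by move=> g' H; apply: Hw; right.
have Hg : ~ A g.1.1 by apply: Hw; left.
case E: [&& _, _ & _] => //; exfalso; move/and3P: E => [_ _ /orP [/eqP Exg | /andP [Hz /eqP Hr]]].
  by apply: Hg; rewrite -Exg.
by apply: Hg; rewrite -Hr; apply: HAc => //; apply/eqP.
Qed.

Lemma exists_max (L : seq (O*nat*nat)) c0 : c0 \in L ->
  exists2 c, c \in L & forall c', c' \in L -> ~ lt c.1.1 c'.1.1.
Proof.
elim: L c0 => [|a L IH] c0 //= _.
case: L IH => [|b L] IH.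
  exists a; first by rewrite inE eqxx.
  by move=> c'; rewrite inE => /eqP ->; apply: lt_irr.
have [c cin cmax] := IH b (mem_head _ _).
have [Hlt|Hnlt] := classic (lt c.1.1 a.1.1).
  exists a; first exact: mem_head.
  move=> c'; rewrite in_cons => /orP [/eqP -> | Hc']; first exact: lt_irr.
  move=> H; apply: (cmax c' Hc'); exact: lt_trans Hlt H.
exists c; first by rewrite in_cons cin orbT.
move=> c'; rewrite in_cons => /orP [/eqP -> //| ]; exact: cmax.
Qed.

Lemma word_exists n (L : seq (O*nat*nat)) (d : O*nat*nat -> bool) :
  size L <= n -> (forall c, c \in L -> ~ A c.1.1) ->
  exists w, [/\ valid_word w, (forall g, List.In g w -> ~ A g.1.1) &
     forall c, c \in L -> mask w c.1.1 c.1.2 c.2 = d c].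
Proof.
elim: n L => [|n IH] L.
  by rewrite leqn0 => /nilP -> _; exists [::]; split.
case: L => [|c0 L0] Hs HL; first by exists [::]; split.
set L := c0 :: L0 in Hs HL *.
have [[[x i] k] cin cmax] := exists_max (mem_head c0 L0 : c0 \in L).
set c := (x, i, k).
set L' := filter (predC1 c) L.
have HsL' : size L' <= n.
  have H1 := count_predC (pred1 c) L.
  have H2 : 0 < count (pred1 c) L by rewrite -has_count has_pred1.
  rewrite /L' size_filter.
  have -> : count (predC1 c) L = count (predC (pred1 c)) L by apply: eq_count.
  move: Hs; rewrite -H1; lia.
have HL' : forall c', c' \in L' -> ~ A c'.1.1.
  by move=> c'; rewrite mem_filter => /andP [_ /HL].
have [w' [Hv' HA' Hm']] := IH L' HsL' HL'.
pose g : gen O := (x, i, fun k' => k' == k).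
have Hgo : forall c', c' \in L -> c' != (x, i, k) ->
    [&& c'.1.2 == g.1.2, g.2 c'.2 & (c'.1.1 == g.1.1) || Succ z rho g.1.1 c'.1.1] = false.
  move=> [[x' j'] n'] c'in Hne /=.
  apply/negP => /and3P [/eqP Ej /eqP En /orP [/eqP Ex | /andP [Hz /eqP Hr]]].
    by move/eqP: Hne; apply; subst.
  apply: (cmax _ c'in) => /=; rewrite -Hr; apply: Hreg; exact/eqP.
have [E|NE] := eqVneq (mask w' x i k) (d (x, i, k)).
  exists w'; split => // c' c'in.
  have [->|Hne] := eqVneq c' (x, i, k); first by [].
  by apply: Hm'; rewrite mem_filter /= Hne.
exists (g :: w'); split.
- split => //; left; exists k.+1 => k' Hk'; exact: gtn_eqF.
- move=> g' [<- | ]; last exact: HA'.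
  exact: (HL _ cin).
- move=> c' c'in; rewrite mask_cons.
  have [->|Hne] := eqVneq c' (x, i, k).
    rewrite /= !eqxx /=; move: NE; by case: (mask _ _ _ _); case: (d _).
  rewrite (Hgo _ c'in Hne) /=; apply: Hm'; by rewrite mem_filter /= Hne.
Qed.

Lemma closure_list x : A x -> exists S : seq O,
  [/\ x \in S, (forall y, y \in S -> A y) & (forall y, y \in S -> y != z -> rho y \in S)].
Proof.
elim/(well_founded_ind lt_wf): x => x IH Ax.
have [Exz | Hxz] := eqVneq x z.
  exists [:: z]; split; first by rewrite Exz inE.
    by move=> y; rewrite inE => /eqP ->; rewrite -Exz.
  by move=> y; rewrite inE => /eqP -> /eqP.
have Hxz' : x <> z by apply/eqP.
have [S [H1 H2 H3]] := IH _ (Hreg Hxz') (HAc Ax Hxz').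
exists (x :: S); split; first exact: mem_head.
  by move=> y; rewrite inE => /orP [/eqP -> // | ]; apply: H2.
move=> y; rewrite inE => /orP [/eqP -> _ | Hy Hyz]; rewrite inE.
- by rewrite H1 orbT.
- by rewrite H3 ?orbT.
Qed.

Lemma closure_lists (S0 : seq O) : (forall x, x \in S0 -> A x) -> exists S : seq O,
  [/\ (forall x, x \in S0 -> x \in S), (forall y, y \in S -> A y) & (forall y, y \in S -> y != z -> rho y \in S)].
Proof.
elim: S0 => [|a S0 IH] HS0.
  by exists [::]; split.
have [S [H1 H2 H3]] := IH (fun x H => HS0 x ((mem_behead (H : x \in behead (a :: S0))))).
have [T [T1 T2 T3]] := closure_list (HS0 a (mem_head _ _)).
exists (T ++ S); split.
- by move=> x; rewrite inE mem_cat => /orP [/eqP -> | /H1 ->]; rewrite ?T1 ?orbT.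
- by move=> y; rewrite mem_cat => /orP [/T2 | /H2].
- move=> y; rewrite !mem_cat => /orP [Hy Hz | Hy Hz]; first by rewrite (T3 y Hy Hz).
  by rewrite (H3 y Hy Hz) orbT.
Qed.


Lemma ext_trans (a b c : cond O) : ext a b -> ext b c -> ext a c.
Proof. by move=> H1 H2 x i n b0 H; apply: H1; apply: H2. Qed.

Lemma sym_lemma (X : name O) (q r s : cond O) m :
  supported_by z rho A X -> X m r -> is_cond q -> ext q r ->
  is_cond s -> (forall x i n b, A x -> q x i n = Some b -> s x i n = Some b) ->
  exists t, is_cond t /\ ext t s /\ exists r0, X m r0 /\ ext t r0.
Proof.
move=> HXA Xr [lq Hlq] Hqr [ls Hls] Hagree.
pose L := [seq c <- lq | ~~ Ab c.1.1].
pose d (c : O * nat * nat) : bool :=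
  match q c.1.1 c.1.2 c.2, s c.1.1 c.1.2 c.2 with
  | Some b1, Some b2 => b1 != b2 | _, _ => false end.
have HL : forall c, c \in L -> ~ A c.1.1.
  by move=> c; rewrite mem_filter => /andP [/AbP H _].
have [w [Hv HwA Hm]] := word_exists d (leqnn (size L)) HL.
pose pi := act_word z rho w.
have HFix : Fix z rho A pi.
  split; first by exists w.
  move=> p x j n Hcl; rewrite /pi act_mask mask_A //.
  exact: (Hcl A HAc (fun y H => H)).
have Hfx := HXA pi HFix.
have Xpr : X m (pi r) by apply/(Hfx m (pi r)); exists r.
have compat : forall x i n b1 b2, pi q x i n = Some b1 -> s x i n = Some b2 -> b1 = b2.
  move=> x i n b1 b2; rewrite /pi act_mask.
  case: (AbP x) => Ax.
    rewrite mask_A // => Hq Hs.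
    by move: (Hagree _ _ _ _ Ax Hq); rewrite Hs => -[].
  case Eq: (q x i n) => [b0|]; last by case: (mask _ _ _ _).
  have Hin : (x, i, n) \in L.
    rewrite mem_filter /=; apply/andP; split; first by apply/negP => /AbP.
    by apply: Hlq; rewrite Eq.
  move=> Hpi Hs; move: Hpi; rewrite (Hm _ Hin) /d /= Eq Hs.
  by case: b0 b1 b2 {Eq Hs} => [] [] [] //= => H; congruence.
pose t : cond O := fun x i n => if s x i n is Some b then Some b else pi q x i n.
exists t; split.
  exists (ls ++ lq) => x i n; rewrite /t mem_cat.
  case Es: (s x i n) => [b|] H.
    by rewrite Hls ?Es.
  apply/orP; right; apply: Hlq; move: H; rewrite /pi act_mask.
  by case: (mask _ _ _ _); case: (q x i n).
split; first by move=> x i n b H; rewrite /t H.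
exists (pi r); split => //.
move=> x i n b; rewrite /pi act_mask => H.
have Hpq : pi q x i n = Some b.
  rewrite /pi act_mask; move: H.
  case Er: (r x i n) => [b'|]; last by case: (mask _ _ _ _).
  by rewrite (Hqr _ _ _ _ Er).
rewrite /t; case Es: (s x i n) => [b2|]; last exact: Hpq.
by rewrite (compat _ _ _ _ _ Hpq Es).
Qed.

Lemma countable_packets : countable_set A -> exists f : nat -> cond O,
  forall r, is_cond r -> (forall x, node_support r x -> A x) -> exists k, f k = r.
Proof.
move=> [fA HfA].
pose idx (x : O) : nat := match excluded_middle_informative (exists k, fA k = x) with
  | left H => proj1_sig (constructive_indefinite_description _ H) | right _ => 0 end.
have idxP : forall x, A x -> fA (idx x) = x.
  move=> x Ax; rewrite /idx; case: excluded_middle_informative => H.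
    by case: constructive_indefinite_description.
  by exfalso; apply: H; apply: HfA.
pose dec (s : seq (nat * nat * nat * bool)) : cond O := fun x i n =>
  foldr (fun e acc => if [&& fA e.1.1.1 == x, e.1.1.2 == i & e.1.2 == n] then Some e.2 else acc) None s.
pose f (k : nat) : cond O := if unpickle k is Some s then dec s else fun _ _ _ => None.
exists f => r [l Hl] HrA.
pose enc (c : O * nat * nat) : option (nat * nat * nat * bool) :=
  if r c.1.1 c.1.2 c.2 is Some b then Some (idx c.1.1, c.1.2, c.2, b) else None.
exists (pickle (pmap enc l)); rewrite /f pickleK.
have key : forall l' x i n, dec (pmap enc l') x i n = if (x, i, n) \in l' then r x i n else None.
  move=> l' x i n; elim: l' => [|[[x' i'] n'] l' IH] //=.
  rewrite /enc /= in_cons.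
  case Er: (r x' i' n') => [b|] /=.
    have Ax' : A x' by apply: HrA; exists i', n'; rewrite Er.
    rewrite idxP //.
    have [E|NE] := eqVneq (x, i, n) (x', i', n').
      by case: E => -> -> ->; rewrite !eqxx.
    rewrite IH /=.
    have -> : [&& x' == x, i' == i & n' == n] = false.
      apply/negP => /and3P [/eqP a /eqP b' /eqP c]; move/eqP: NE; apply; by subst.
    by [].
  rewrite IH; have [E|NE] := eqVneq (x, i, n) (x', i', n') => //=.
  by case: E => -> -> ->; rewrite Er; case: ifP.
apply: functional_extensionality => x; apply: functional_extensionality => i;
apply: functional_extensionality => n.
rewrite key; case: ifP => // Hn.
case E: (r x i n) => [b|] //.
by move: Hn; rewrite Hl // E.
Qed.

Lemma main_lemma (X : name O) (HA : countable_set A) (HXA : supported_by z rho A X) :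
  exists C : nat -> cond O -> Prop,
    packet_scheme z rho A C /\ forces_eq X (x_S C).
Proof.
pose C := fun m (r : cond O) =>
  [/\ exact_packet z rho r, (forall x, node_support r x -> A x) & forces_mem r m X].
exists C; split.
  split => // m; split; last by move=> r [H1 H2 _].
  have [f Hf] := countable_packets HA.
  exists f => r [[Hr _] HrA _]; exact: Hf.
split; last first.
  move=> m r' [_ _ Hf] q Hq Hqr q' Hq' Hq'q.
  by apply: Hf => //; apply: ext_trans Hq'q Hqr.
move=> m r Xr q Hq Hqr q' [l Hl] Hq'q.
pose S0 := [seq c.1.1 | c <- l & Ab c.1.1].
have [S [HS0 HSA HSc]] : exists S : seq O,
  [/\ (forall x, x \in S0 -> x \in S), (forall y, y \in S -> A y) & (forall y, y \in S -> y != z -> rho y \in S)].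
  apply: closure_lists => x /mapP [c]; rewrite mem_filter => /andP [/AbP Ac _] ->; exact: Ac.
pose q'' : cond O := fun x i n => if q' x i n is Some b then Some b
   else if [&& x \in S, i == 0 & n == 0] then Some false else None.
pose r' : cond O := fun x i n => if x \in S then q'' x i n else None.
have Hq''c : is_cond q''.
  exists (l ++ [seq (x, 0, 0) | x <- S]) => x i n; rewrite /q'' mem_cat.
  case E: (q' x i n) => [b|] H; first by rewrite Hl ?E.
  move: H; case: ifP => // /and3P [xS /eqP -> /eqP ->] _.
  by apply/orP; right; apply: map_f.
have Hq''q' : ext q'' q' by move=> x i n b H; rewrite /q'' H.
have Hns : forall x, node_support r' x <-> x \in S.
  move=> x; split.
    by move=> [i [n]]; rewrite /r'; case: ifP.
  move=> xS; exists 0, 0; rewrite /r' xS /q''; case: (q' x 0 0) => //.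
  by rewrite xS.
have Hq''S : forall x i n, q'' x i n <> None -> A x -> x \in S.
  move=> x i n; rewrite /q''; case E: (q' x i n) => [b|] H Ax.
    apply: HS0; apply/mapP; exists (x, i, n) => //; rewrite mem_filter /=.
    by apply/andP; split; [apply/AbP | apply: Hl; rewrite E].
  by move: H; case: ifP => // /and3P [].
exists q''; split => //; split => //.
exists r'; split; last first.
  by move=> x i n b; rewrite /r'; case: ifP.
split; last first.
- move=> s Hs Hsr'.
  apply: (sym_lemma HXA Xr Hq''c) => //.
    apply: ext_trans Hq''q' _; apply: ext_trans Hq'q Hqr.
  move=> x i n b Ax H; apply: Hsr'.
  have xS : x \in S by apply: (Hq''S x i n) => //; rewrite H.
  by rewrite /r' xS.
- by move=> x /Hns /HSA.
split.
  case: Hq''c => l'' Hl''; exists l'' => x i n; rewrite /r'; case: ifP => // _; exact: Hl''.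
move=> x /Hns xS xz; apply/Hns; apply: HSc => //; exact/eqP.
Qed.

End Proof.

Theorem theorem4p5 (O : eqType) (lt : O -> O -> Prop) (z : O) (rho : O -> O)
  (Hom1 : is_omega1 lt z) (Hreg : regressive lt z rho)
  (X : name O) (A : O -> Prop)
  (HA : countable_set A) (HAc : rho_closed z rho A)
  (HX : hereditarily_symmetric z rho X)
  (HXA : supported_by z rho A X) :
  exists C : nat -> cond O -> Prop,
    packet_scheme z rho A C /\ forces_eq X (x_S C).
Proof.
exact: (main_lemma Hom1 Hreg HAc HA HXA).
Qed.
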